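(* Let $\Delta_2=\{A=(a_{ij})\in SL_3(\mathfrak{o}) : a_{21}=a_{31}=0\}$. Then $$\Delta_2=\bigsqcup_{y\in Y(\mathfrak{o})}\ \bigsqcup_{d\in D(3)}\ \bigsqcup_{u\in U(3)} \varphi_2(y^{-1})\,d\,u\,\Gamma_\infty(3),$$ i.e. $\Delta_2$ is the union of the sets $\varphi_2(y^{-1})du\Gamma_\infty(3)$ and these sets are pairwise disjoint for distinct triples $(y,d,u)$.
   Context: Let $\omega=e^{2\pi i/3}$, $\mathfrak{o}=\mathbb{Z}[\omega]$, $\mathfrak{o}^\times$ its unit group. Fix representatives of nonzero elements modulo units (''$c\in(\mathfrak{o}-\{0\})/\mathfrak{o}^\times$'') and, for each nonzero $c$, representatives of $\mathfrak{o}/c\mathfrak{o}$ (''$a\in\mathfrak{o}/c\mathfrak{o}$''). $Y(\mathfrak{o})=\{\begin{pmatrix}a&b\\c&d\end{pmatrix}\in SL_2(\mathfrak{o}) : c\in(\mathfrak{o}-\{0\})/\mathfrak{o}^\times,\ a\in\mathfrak{o}/c\mathfrak{o}\}\cup\{I_2\}$. $\Gamma(3)=\{A\in SL_3(\mathfrak{o}):A\equiv I_3\pmod{3\mathfrak{o}}\}$ (entrywise), $\Gamma_\infty(3)$ its subgroup of upper triangular unipotent matrices. $D(3)$: diagonal $\mathrm{diag}(i,j,k)$ with $i,j,k\in\mathfrak{o}$, $ijk=1$. $U(3)$: matrices $\begin{pmatrix}1&\alpha&\beta\\&1&\gamma\\&&1\end{pmatrix}$ with $\alpha,\beta,\gamma\in\{0,1,2\}+\{0,1,2\}\omega$.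 For $y=\begin{pmatrix}a&b\\c&d\end{pmatrix}\in SL_2(\mathfrak{o})$, $\varphi_2(y)=\begin{pmatrix}1&0&0\\0&a&b\\0&c&d\end{pmatrix}$. *)

(* Defs.v *)
(* The ring o = Z[omega] is realized inside algC. *)
From HB Require Import structures.
From mathcomp Require Import all_boot all_order all_algebra all_field.
Set Implicit Arguments. Unset Strict Implicit. Unset Printing Implicit Defensive.
Import Order.TTheory GRing.Theory Num.Theory.
Local Open Scope ring_scope.

(* omega = e^{2 pi i/3} = (-1 + i sqrt 3)/2 *)
Definition omega : algC := (-1 + 'i * sqrtC 3) / 2.

Definition in_o (z : algC) : Prop :=
  exists a b : int, z = a%:~R + b%:~R * omega.

Definition unit_o (u : algC) : Prop :=
  in_o u /\ exists v, in_o v /\ u * v = 1.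

Definition SL_o (n : nat) (A : 'M[algC]_n) : Prop :=
  (forall i j, in_o (A i j)) /\ \det A = 1.

Definition i0 : 'I_3 := @Ordinal 3 0 isT.
Definition i1 : 'I_3 := @Ordinal 3 1 isT.
Definition i2 : 'I_3 := @Ordinal 3 2 isT.
Definition j0 : 'I_2 := @Ordinal 2 0 isT.
Definition j1 : 'I_2 := @Ordinal 2 1 isT.

Definition Delta2 (A : 'M[algC]_3) : Prop :=
  SL_o A /\ A i1 i0 = 0 /\ A i2 i0 = 0.

Definition is_rep_nonzero_mod_units (Crep : algC -> Prop) : Prop :=
  (forall c, Crep c -> in_o c /\ c != 0) /\
  (forall z, in_o z -> z != 0 ->
     exists c, Crep c /\ (exists u, unit_o u /\ z = u * c) /\
       forall c', Crep c' -> (exists u, unit_o u /\ z = u * c') -> c' = c).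

Definition is_rep_mod (c : algC) (Ac : algC -> Prop) : Prop :=
  (forall a, Ac a -> in_o a) /\
  (forall z, in_o z ->
     exists a, Ac a /\ (exists k, in_o k /\ z - a = k * c) /\
       forall a', Ac a' -> (exists k, in_o k /\ z - a' = k * c) -> a' = a).

Definition Yset (Crep : algC -> Prop) (Arep : algC -> algC -> Prop)
  (y : 'M[algC]_2) : Prop :=
  (SL_o y /\ Crep (y j1 j0) /\ Arep (y j1 j0) (y j0 j0)) \/ y = 1%:M.

Definition diag3 (i j k : algC) : 'M[algC]_3 :=
  \matrix_(r < 3, s < 3)
    (if r == s then (if r == i0 then i else if r == i1 then j else k) else 0).

Definition D3 (d : 'M[algC]_3) : Prop :=
  exists i j k, [/\ in_o i, in_o j, in_o k, i * j * k = 1 & d = diag3 i j k].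

Definition upper3 (al be ga : algC) : 'M[algC]_3 :=
  \matrix_(r < 3, s < 3)
    (if r == s then 1
     else if (r == i0) && (s == i1) then al
     else if (r == i0) && (s == i2) then be
     else if (r == i1) && (s == i2) then ga
     else 0).

Definition rep3 (z : algC) : Prop :=
  exists m n : nat, (m < 3)%N /\ (n < 3)%N /\ z = m%:R + n%:R * omega.

Definition U3 (u : 'M[algC]_3) : Prop :=
  exists al be ga, [/\ rep3 al, rep3 be, rep3 ga & u = upper3 al be ga].

Definition Gamma3 (A : 'M[algC]_3) : Prop :=
  SL_o A /\ forall i j, exists k, in_o k /\ (A - 1%:M) i j = 3 * k.

Definition Gamma_inf3 (A : 'M[algC]_3) : Prop :=
  Gamma3 A /\ exists al be ga, A = upper3 al be ga.

Definition phi2 (y : 'M[algC]_2) : 'M[algC]_3 := lift0_mx y.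

(* Main.v *)
Require Import Defs.
From HB Require Import structures.
From mathcomp Require Import all_boot all_order all_algebra all_field.
From mathcomp Require Import ring zify.
Import Order.TTheory GRing.Theory Num.Theory.
Local Open Scope ring_scope.

Definition mk3 (a b c d e f g h k : algC) : 'M[algC]_3 := \matrix_(r < 3, s < 3)
  (if r == i0 then (if s == i0 then a else if s == i1 then b else c)
   else if r == i1 then (if s == i0 then d else if s == i1 then e else f)
   else (if s == i0 then g else if s == i1 then h else k)).

Lemma ord3P (r : 'I_3) : [\/ r = i0, r = i1 | r = i2].
Proof.
case: r => [[|[|[|r]]] Hr] //.
- by constructor 1; apply: val_inj.
- by constructor 2; apply: val_inj.
- by constructor 3; apply: val_inj.
Qed.

Lemma mk3_mul a b c d e f g h k a' b' c' d' e' f' g' h' k' :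
  mk3 a b c d e f g h k *m mk3 a' b' c' d' e' f' g' h' k' =
  mk3 (a*a' + b*d' + c*g') (a*b' + b*e' + c*h') (a*c' + b*f' + c*k')
      (d*a' + e*d' + f*g') (d*b' + e*e' + f*h') (d*c' + e*f' + f*k')
      (g*a' + h*d' + k*g') (g*b' + h*e' + k*h') (g*c' + h*f' + k*k').
Proof.
apply/matrixP => r s; rewrite !mxE !big_ord_recl big_ord0 !mxE.
by case: (ord3P r) => ->; case: (ord3P s) => -> /=; rewrite addr0 ?addrA.
Qed.

Lemma det_mk3 a b c d e f g h k :
  \det (mk3 a b c d e f g h k) = a*(e*k - f*h) - b*(d*k - f*g) + c*(d*h - e*g).
Proof.
rewrite (expand_det_row _ i0) !big_ord_recl big_ord0 /cofactor.
rewrite !(expand_det_row _ ord0) !big_ord_recl !big_ord0 /cofactor.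
rewrite !det_mx11 !mxE /=.
rewrite /bump /=; ring.
Qed.

Lemma mk3_eta (A : 'M[algC]_3) :
  A = mk3 (A i0 i0) (A i0 i1) (A i0 i2) (A i1 i0) (A i1 i1) (A i1 i2) (A i2 i0) (A i2 i1) (A i2 i2).
Proof. by apply/matrixP => r s; rewrite mxE; case: (ord3P r) => ->; case: (ord3P s) => ->. Qed.

Lemma mk3_inj a b c d e f g h k a' b' c' d' e' f' g' h' k' :
  mk3 a b c d e f g h k = mk3 a' b' c' d' e' f' g' h' k' ->
  [/\ a = a', b = b', c = c', d = d' & [/\ e = e', f = f', g = g', h = h' & k = k']].
Proof.
move=> E.
have H r s : mk3 a b c d e f g h k r s = mk3 a' b' c' d' e' f' g' h' k' r s by rewrite E.
move: (H i0 i0) (H i0 i1) (H i0 i2) (H i1 i0) (H i1 i1) (H i1 i2) (H i2 i0) (H i2 i1) (H i2 i2).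
by rewrite !mxE /=.
Qed.

Lemma mk3_sub a b c d e f g h k a' b' c' d' e' f' g' h' k' :
  mk3 a b c d e f g h k - mk3 a' b' c' d' e' f' g' h' k' =
  mk3 (a-a') (b-b') (c-c') (d-d') (e-e') (f-f') (g-g') (h-h') (k-k').
Proof.
apply/matrixP => r s; rewrite !mxE.
by case: (ord3P r) => ->; case: (ord3P s) => ->.
Qed.

Lemma mk3_all (P : algC -> Prop) a b c d e f g h k :
  P a -> P b -> P c -> P d -> P e -> P f -> P g -> P h -> P k ->
  forall r s, P (mk3 a b c d e f g h k r s).
Proof.
move=> Ha Hb Hc Hd He Hf Hg Hh Hk r s; rewrite mxE.
by case: (ord3P r) => ->; case: (ord3P s) => ->.
Qed.

Lemma diag3E i j k : diag3 i j k = mk3 i 0 0 0 j 0 0 0 k.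
Proof.
apply/matrixP => r s; rewrite !mxE.
by case: (ord3P r) => ->; case: (ord3P s) => ->.
Qed.

Lemma upper3E al be ga : upper3 al be ga = mk3 1 al be 0 1 ga 0 0 1.
Proof.
apply/matrixP => r s; rewrite !mxE.
by case: (ord3P r) => ->; case: (ord3P s) => ->.
Qed.

Lemma one3E : (1%:M : 'M[algC]_3) = mk3 1 0 0 0 1 0 0 0 1.
Proof.
apply/matrixP => r s; rewrite !mxE.
by case: (ord3P r) => ->; case: (ord3P s) => ->.
Qed.

Definition mk2 (a b c d : algC) : 'M[algC]_2 := \matrix_(r < 2, s < 2)
  (if r == j0 then (if s == j0 then a else b) else (if s == j0 then c else d)).

Lemma ord2P (r : 'I_2) : r = j0 \/ r = j1.
Proof.
case: r => [[|[|r]] Hr] //.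
- by left; apply: val_inj.
- by right; apply: val_inj.
Qed.

Lemma phi2E Y : phi2 Y = mk3 1 0 0 0 (Y j0 j0) (Y j0 j1) 0 (Y j1 j0) (Y j1 j1).
Proof.
have e0 : (i0 : 'I_(1+2)) = lshift 2 (ord0 : 'I_1) by apply: val_inj.
have e1 : (i1 : 'I_(1+2)) = rshift 1 j0 by apply: val_inj.
have e2 : (i2 : 'I_(1+2)) = rshift 1 j1 by apply: val_inj.
apply/matrixP => r s; rewrite [RHS]mxE /phi2 /lift0_mx.
case: (ord3P r) => ->; case: (ord3P s) => -> /=;
  rewrite ?e0 ?e1 ?e2 !mxE -?[lshift 2 ord0]/(unsplit (inl ord0))
    -?[rshift 1 j0]/(unsplit (inr j0)) -?[rshift 1 j1]/(unsplit (inr j1)) !unsplitK !mxE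
    -?[lshift 2 ord0]/(unsplit (inl ord0))
    -?[rshift 1 j0]/(unsplit (inr j0)) -?[rshift 1 j1]/(unsplit (inr j1)) ?unsplitK ?mxE //.
Qed.
Lemma omega2 : omega * omega = - 1 - omega.
Proof.
rewrite /omega.
set x := (X in (-1 + X)).
have hx : x * x = -3.
  rewrite /x mulrACA -!expr2 sqrCi sqrtCK; ring.
have -> : (-1 + x) / 2 * ((-1 + x) / 2) = (1 - 2 * x + x * x) / 4.
  by rewrite mulf_div -[4]/(2*2)%:R natrM; congr (_ / _); ring.
rewrite hx.
apply: (@mulIf _ 4); first by rewrite pnatr_eq0.
rewrite mulfVK ?pnatr_eq0 //.
rewrite mulrBl mulrDl.
have -> : (-1 + x) / 2 * 4 = (-1 + x) * 2.
  by rewrite -mulrA; congr (_ * _); rewrite -[4]/(2*2)%:R natrM mulKf ?pnatr_eq0.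
ring.
Qed.

Lemma omega_eq (P Q : algC) r : P - Q = r * (omega * omega + omega + 1) -> P = Q.
Proof.
rewrite omega2 => h; apply/eqP; rewrite -subr_eq0 h.
have -> : (-1 - omega + omega + 1) = 0 by ring.
by rewrite mulr0.
Qed.

Lemma in_o_int (z : int) : in_o z%:~R.
Proof. by exists z, 0; rewrite mul0r addr0. Qed.
Lemma in_o0 : in_o 0. Proof. by have := in_o_int 0. Qed.
Lemma in_o1 : in_o 1. Proof. by have := in_o_int 1. Qed.
Lemma in_o_nat (n : nat) : in_o n%:R. Proof. by have := in_o_int n. Qed.
Lemma in_o_omega : in_o omega. Proof. by exists 0, 1; rewrite mul1r add0r. Qed.

Lemma in_oD x y : in_o x -> in_o y -> in_o (x + y).
Proof.
move=> [a [b ->]] [c [d ->]]; exists (a + c), (b + d).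
by rewrite !rmorphD /=; ring.
Qed.
Lemma in_oN x : in_o x -> in_o (- x).
Proof.
move=> [a [b ->]]; exists (- a), (- b).
by rewrite !rmorphN /=; ring.
Qed.
Lemma in_oB x y : in_o x -> in_o y -> in_o (x - y).
Proof. by move=> hx hy; apply: in_oD => //; apply: in_oN. Qed.
Lemma in_oM x y : in_o x -> in_o y -> in_o (x * y).
Proof.
move=> [a [b ->]] [c [d ->]]; exists (a * c - b * d), (a * d + b * c - b * d).
rewrite ?(rmorphD, rmorphN, rmorphM, rmorphB) /=.
apply: (@omega_eq _ _ (b%:~R * d%:~R)); ring.
Qed.

Lemma o_indep (a b : int) : a%:~R + b%:~R * omega = 0 :> algC -> a = 0 /\ b = 0.
Proof.
move=> h.
have hn : (a * a - a * b + b * b)%:~R = 0 :> algC.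
  have -> : (a * a - a * b + b * b)%:~R = (a%:~R + b%:~R * omega) * (a%:~R + b%:~R * (-1 - omega)) :> algC.
    rewrite ?(rmorphD, rmorphN, rmorphM, rmorphB) /=.
    apply: esym; apply: (@omega_eq _ _ (- b%:~R * b%:~R)). ring.
  by rewrite h mul0r.
move/eqP: hn; rewrite intr_eq0 => /eqP hn.
have : (2 * a - b) * (2 * a - b) + 3 * (b * b) = 0.
  by rewrite -[RHS](mulr0 4) -hn; ring.
move=> h2.
nia.
Qed.

Lemma natz_intr (n : nat) : n%:R = (n%:Z)%:~R :> algC.
Proof. by rewrite pmulrn. Qed.

Lemma int_mod3 (a : int) : exists (m : nat) (q : int), (m < 3)%N /\ a = 3 * q + m%:Z.
Proof.
have h3 : (0 < (3:int)) by lia.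
have h3' : ((3:int) != 0) by lia.
move: (divz_eq a 3) (modz_ge0 a h3') (ltz_pmod a h3).
move: (a %/ 3)%Z (a %% 3)%Z => q [] // n hd _ hl.
exists n, q; split; lia.
Qed.

Lemma rep3_exists z : in_o z -> exists r, rep3 r /\ exists k, in_o k /\ z - r = 3 * k.
Proof.
move=> [a [b ->]].
have [m [q [hm ha]]] := int_mod3 a.
have [n [p [hn hb]]] := int_mod3 b.
exists (m%:R + n%:R * omega); split; first by exists m, n.
exists (q%:~R + p%:~R * omega); split; first by apply: in_oD; [apply: in_o_int | apply: in_oM; [apply: in_o_int|apply: in_o_omega]].
rewrite ha hb !natz_intr ?(rmorphD, rmorphN, rmorphM, rmorphB) /=; ring.
Qed.

Lemma rep3_unique r r' : rep3 r -> rep3 r' -> (exists k, in_o k /\ r - r' = 3 * k) -> r = r'.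
Proof.
move=> [m [n [hm [hn ->]]]] [m' [n' [hm' [hn' ->]]]] [k [[x [y ->]]]] h.
have : (m%:Z - m'%:Z - 3 * x)%:~R + (n%:Z - n'%:Z - 3 * y)%:~R * omega = 0 :> algC.
  move: h; rewrite !natz_intr ?(rmorphD, rmorphN, rmorphM, rmorphB) /= => h.
  apply/eqP; rewrite -subr_eq0; apply/eqP.
  have -> : (m%:Z)%:~R - (m'%:Z)%:~R - (3%:~R * x%:~R) + ((n%:Z)%:~R - (n'%:Z)%:~R - (3%:~R * y%:~R)) * omega - 0
    = ((m%:Z)%:~R + (n%:Z)%:~R * omega - ((m'%:Z)%:~R + (n'%:Z)%:~R * omega)) - 3 * (x%:~R + y%:~R * omega) :> algC.
    rewrite -[3 : algC]/(3%:~R); ring.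
  by rewrite h subrr.
move/o_indep => [h1 h2].
have e1 : m = m' by lia.
have e2 : n = n' by lia.
by rewrite e1 e2.
Qed.

Lemma unit_o_neq0 u : unit_o u -> u != 0.
Proof. by move=> [_ [v [_ h]]]; apply/eqP => u0; move: h; rewrite u0 mul0r => /eqP; rewrite eq_sym oner_eq0. Qed.

Lemma unit3 i j k : in_o i -> in_o j -> in_o k -> i * j * k = 1 ->
  [/\ unit_o i, unit_o j & unit_o k].
Proof.
move=> hi hj hk h; split; split => //.
- by exists (j * k); split; [apply: in_oM | rewrite mulrA].
- by exists (i * k); split; [apply: in_oM | rewrite -h; ring].
- by exists (i * j); split; [apply: in_oM | rewrite -h; ring].
Qed.

Definition in3 z := exists k, in_o k /\ z = 3 * k.

Lemma in3_o z : in3 z -> in_o z.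
Proof. by move=> [k [hk ->]]; apply: in_oM => //; apply: in_o_nat. Qed.
Arguments in_oM {x y}. Arguments in_oD {x y}. Arguments in_oB {x y}. Arguments in_oN {x}.

Lemma mk2_eta (Y : 'M[algC]_2) : Y = mk2 (Y j0 j0) (Y j0 j1) (Y j1 j0) (Y j1 j1).
Proof. by apply/matrixP => r s; rewrite mxE; case: (ord2P r) => ->; case: (ord2P s) => ->. Qed.

Lemma det2 (Y : 'M[algC]_2) : \det Y = Y j0 j0 * Y j1 j1 - Y j0 j1 * Y j1 j0.
Proof.
rewrite (expand_det_row _ j0) !big_ord_recl big_ord0 /cofactor !det_mx11 !mxE /=.
rewrite (_ : lift (lift ord0 ord0) _ = j0 :> 'I_2); last by apply: val_inj.
rewrite (_ : lift ord0 _ = j1 :> 'I_2); last by apply: val_inj.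
try (rewrite (_ : lift ord0 _ = j1 :> 'I_2); last by apply: val_inj).
try (rewrite (_ : ord0 = j0 :> 'I_2); last by apply: val_inj).
rewrite (_ : lift j0 _ = j1 :> 'I_2); last by apply: val_inj.
rewrite /bump /=.
ring.
Qed.

Lemma invmx2 (Y : 'M[algC]_2) : \det Y = 1 ->
  invmx Y = mk2 (Y j1 j1) (- Y j0 j1) (- Y j1 j0) (Y j0 j0).
Proof.
move=> hd.
have hm : Y *m mk2 (Y j1 j1) (- Y j0 j1) (- Y j1 j0) (Y j0 j0) = 1%:M.
  move: hd; rewrite det2 => hd.
  apply/matrixP => r s; rewrite !mxE !big_ord_recl big_ord0 !mxE.
  have -> : (lift ord0 ord0 : 'I_2) = j1 by apply: val_inj.
  have -> : (ord0 : 'I_2) = j0 by apply: val_inj.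
  case: (ord2P r) => ->; case: (ord2P s) => -> /=; rewrite -?hd; ring.
have [hu _] := mulmx1_unit hm.
by rewrite -[RHS](mulKmx hu) hm mulmx1.
Qed.

Lemma phi2_inv (Y : 'M[algC]_2) : \det Y = 1 -> phi2 (invmx Y) *m phi2 Y = 1%:M.
Proof.
move=> hd; rewrite !phi2E invmx2 // one3E mk3_mul !mxE /=.
move: hd; rewrite det2 => hd.
congr mk3; first [ring | rewrite -hd; ring].
Qed.

Lemma SL_o1 : SL_o (1%:M : 'M[algC]_2).
Proof.
split; last by rewrite det1.
by move=> r s; rewrite mxE; case: (r == s); [apply: in_o1 | apply: in_o0].
Qed.

Lemma mk3_in_o a b c d e f g h k :
  in_o a -> in_o b -> in_o c -> in_o d -> in_o e -> in_o f -> in_o g -> in_o h -> in_o k ->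
  forall r s, in_o (mk3 a b c d e f g h k r s).
Proof. exact: mk3_all. Qed.

Lemma mulmx_in_o (A B : 'M[algC]_3) : (forall r s, in_o (A r s)) -> (forall r s, in_o (B r s)) ->
  forall r s, in_o ((A *m B) r s).
Proof.
move=> hA hB r s; rewrite mxE !big_ord_recl big_ord0 addr0.
by repeat apply: in_oD; apply: in_oM.
Qed.

Lemma Gamma_inf3_E g : Gamma_inf3 g -> exists al be ga, [/\ in3 al, in3 be, in3 ga & g = upper3 al be ga].
Proof.
move=> [[_ hm] [al [be [ga hg]]]]; exists al, be, ga; split => //.
- by have := hm i0 i1; rewrite hg upper3E one3E mk3_sub mxE /= subr0.
- by have := hm i0 i2; rewrite hg upper3E one3E mk3_sub mxE /= subr0.
- by have := hm i1 i2; rewrite hg upper3E one3E mk3_sub mxE /= subr0.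
Qed.

Lemma Gamma_inf3_I al be ga : in3 al -> in3 be -> in3 ga -> Gamma_inf3 (upper3 al be ga).
Proof.
move=> ha hb hc; split; last by exists al, be, ga.
have h0 : in3 0 by exists 0; split; [apply: in_o0 | rewrite mulr0].
have h0' : in3 (1 - 1) by rewrite subrr.
split; first split.
- rewrite upper3E; apply: mk3_all; (apply: in_o0 || apply: in_o1 || apply: in3_o) => //.
- rewrite upper3E det_mk3; ring.
- rewrite upper3E one3E mk3_sub; apply: (@mk3_all in3); rewrite ?subr0 //.
Qed.

Lemma D3_I i j k : in_o i -> in_o j -> in_o k -> i * j * k = 1 -> D3 (diag3 i j k).
Proof. by move=> *; exists i, j, k; split. Qed.

Lemma U3_I al be ga : rep3 al -> rep3 be -> rep3 ga -> U3 (upper3 al be ga).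
Proof. by move=> *; exists al, be, ga; split. Qed.

Lemma dug_E i j k al be ga g1 g2 g3 :
  diag3 i j k *m upper3 al be ga *m upper3 g1 g2 g3 =
  mk3 i (i*(al+g1)) (i*(g2 + al*g3 + be)) 0 j (j*(ga+g3)) 0 0 k.
Proof. rewrite diag3E !upper3E !mk3_mul; congr mk3; ring. Qed.

Lemma tri_decomp x0 x01 x02 x1 x12 x2 :
  in_o x0 -> in_o x01 -> in_o x02 -> in_o x1 -> in_o x12 -> in_o x2 -> x0 * x1 * x2 = 1 ->
  exists d u g, [/\ D3 d, U3 u, Gamma_inf3 g & mk3 x0 x01 x02 0 x1 x12 0 0 x2 = d *m u *m g].
Proof.
move=> h0 h01 h02 h1 h12 h2 h.
have [al [ral [k1 [hk1 e1]]]] := rep3_exists _ (in_oM h01 (in_oM h1 h2)).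
have [ga [rga [k3 [hk3 e3]]]] := rep3_exists _ (in_oM h12 (in_oM h0 h2)).
have hal : in_o al by case: ral => m [n [_ [_ ->]]]; apply: in_oD; [apply: in_o_nat|apply: in_oM; [apply: in_o_nat|apply: in_o_omega]].
have [be [rbe [k2 [hk2 e2]]]] := rep3_exists _ (in_oB (in_oM h02 (in_oM h1 h2)) (in_oM hal (in_oM (in_o_nat 3) hk3))).
exists (diag3 x0 x1 x2), (upper3 al be ga), (upper3 (3 * k1) (3 * k2) (3 * k3)); split.
- exact: D3_I.
- exact: U3_I.
- by apply: Gamma_inf3_I; [exists k1 | exists k2 | exists k3].
rewrite dug_E -e1 -e2 -e3.
congr mk3; rewrite -[LHS]mulr1 -h; ring.
Qed.
Arguments tri_decomp {x0 x01 x02 x1 x12 x2}.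

Lemma eq_mod (x y t s : algC) : s = 0 -> x - y = t * s -> x = y.
Proof. by move=> -> ; rewrite mulr0 => /eqP; rewrite subr_eq0 => /eqP. Qed.

Lemma mk2E a b c d : [/\ mk2 a b c d j0 j0 = a, mk2 a b c d j0 j1 = b,
  mk2 a b c d j1 j0 = c & mk2 a b c d j1 j1 = d].
Proof. by rewrite !mxE. Qed.

Lemma phi2_in_o y : SL_o y -> forall r s, in_o (phi2 y r s).
Proof.
move=> [hy _]; rewrite phi2E; apply: mk3_all => //; (apply: in_o0 || apply: in_o1).
Qed.

Lemma phi2_1 : phi2 (1%:M) = 1%:M.
Proof. by rewrite phi2E one3E !mxE. Qed.

Lemma exist_from_y (A : 'M[algC]_3) (y : 'M[algC]_2) : SL_o A -> A i1 i0 = 0 -> A i2 i0 = 0 ->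
  SL_o y -> (phi2 y *m A) i2 i1 = 0 ->
  exists d u g, [/\ D3 d, U3 u, Gamma_inf3 g & A = phi2 (invmx y) *m d *m u *m g].
Proof.
move=> [hAo hAd] h10 h20 hy h21.
have hyd := hy.2.
set X := phi2 y *m A.
have hXo : forall r s, in_o (X r s) by apply: mulmx_in_o => //; apply: phi2_in_o.
have hX10 : X i1 i0 = 0.
  by rewrite /X phi2E [A]mk3_eta mk3_mul mxE /= h10 h20; ring.
have hX20 : X i2 i0 = 0.
  by rewrite /X phi2E [A]mk3_eta mk3_mul mxE /= h10 h20; ring.
have hdet : \det X = 1.
  rewrite /X det_mulmx hAd phi2E det_mk3; move: hyd; rewrite det2 => hyd; rewrite -[RHS]hyd; ring.
have hXE : X = mk3 (X i0 i0) (X i0 i1) (X i0 i2) 0 (X i1 i1) (X i1 i2) 0 0 (X i2 i2).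
  by rewrite {1}[X]mk3_eta hX10 hX20 h21.
have hprod : X i0 i0 * X i1 i1 * X i2 i2 = 1.
  by rewrite -hdet [in RHS]hXE det_mk3; ring.
have [d [u [g [hd hu hg he]]]] := tri_decomp (hXo i0 i0) (hXo i0 i1) (hXo i0 i2)
   (hXo i1 i1) (hXo i1 i2) (hXo i2 i2) hprod.
exists d, u, g; split => //.
rewrite {1}(_ : A = phi2 (invmx y) *m X); last by rewrite /X mulmxA phi2_inv // mul1mx.
by rewrite hXE he !mulmxA.
Qed.

Lemma mk2_SL a b c d : in_o a -> in_o b -> in_o c -> in_o d -> a * d - b * c = 1 -> SL_o (mk2 a b c d).
Proof.
move=> ha hb hc hd h; split.
  by move=> r s; rewrite mxE; case: (ord2P r) => ->; case: (ord2P s) => ->.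
by rewrite det2 !mxE.
Qed.

Lemma Yset_SL Crep Arep y : Yset Crep Arep y -> SL_o y.
Proof. by case=> [[]|->] //; exact: SL_o1. Qed.

Lemma exist_main Crep Arep (hC : is_rep_nonzero_mod_units Crep)
  (hA : forall c, Crep c -> is_rep_mod c (Arep c)) (A : 'M[algC]_3) :
  Delta2 A -> exists y d u g, [/\ Yset Crep Arep y, D3 d, U3 u, Gamma_inf3 g &
                        A = phi2 (invmx y) *m d *m u *m g].
Proof.
move=> [[hAo hAd] [h10 h20]].
suff [y [hy h21]] : exists y, Yset Crep Arep y /\ (phi2 y *m A) i2 i1 = 0.
  have [d [u [g [hd hu hg he]]]] := exist_from_y A y (conj hAo hAd) h10 h20 (Yset_SL _ _ _ hy) h21.
  by exists y, d, u, g.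
have hdet : A i0 i0 * (A i1 i1 * A i2 i2 - A i1 i2 * A i2 i1) = 1.
  by rewrite -hAd [in RHS](mk3_eta A) det_mk3 h10 h20; ring.
have [hq0|hq] := eqVneq (A i2 i1) 0.
  exists 1%:M; split; first by right.
  by rewrite phi2_1 mul1mx.
have [_ hC2] := hC.
have [c [hc [[w [[hwo [w' [hw'o hww']]] hq']] _]]] := hC2 _ (hAo i2 i1) hq.
have [hco _] := hC.1 c hc.
set e' := A i0 i0.
set p := A i1 i1.
set q := A i2 i1.
set r12 := A i1 i2.
set r22 := A i2 i2.
set y11 := - p * w'.
set a0 := - r22 * e' * w.
set b0 := w * r12 * e'.
have ha0 : in_o a0 := in_oM (in_oM (in_oN (hAo i2 i2)) (hAo i0 i0)) hwo.
have [hAr hrep] := hA c hc.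
have [a [har [[k [hko hk]] _]]] := hrep a0 ha0.
have hy11 : in_o y11 := in_oM (in_oN (hAo i1 i1)) hw'o.
exists (mk2 a (b0 - k * y11) c y11); split.
  left; split; last by rewrite !mxE.
  apply: mk2_SL => //.
  - by apply: hAr.
  - exact: in_oB (in_oM (in_oM hwo (hAo i1 i2)) (hAo i0 i0)) (in_oM hko hy11).
  have ea : a = a0 - k * c by rewrite -hk; ring.
  rewrite ea -hdet.
  apply: (@eq_mod _ _ (r22 * e' * p) (w * w' - 1)); first by rewrite hww' subrr.
  rewrite /a0 /y11 /b0 /q hq' /r22 /e' /p /r12; ring.
rewrite phi2E [A]mk3_eta mk3_mul !mxE /=.
apply: (@eq_mod _ _ (- c * p) (w * w' - 1)); first by rewrite hww' subrr.
rewrite /q hq' /y11 /p; ring.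
Qed.

Lemma eq_mod2 (x y t1 s1 t2 s2 : algC) : s1 = 0 -> s2 = 0 -> x - y = t1 * s1 + t2 * s2 -> x = y.
Proof. by move=> -> ->; rewrite !mulr0 addr0 => /eqP; rewrite subr_eq0 => /eqP. Qed.

Lemma eq_mod3 (x y t1 s1 t2 s2 t3 s3 : algC) : s1 = 0 -> s2 = 0 -> s3 = 0 ->
  x - y = t1 * s1 + t2 * s2 + t3 * s3 -> x = y.
Proof. by move=> -> -> ->; rewrite !mulr0 !addr0 => /eqP; rewrite subr_eq0 => /eqP. Qed.

Lemma rep3_o r : rep3 r -> in_o r.
Proof.
by case=> m [n [_ [_ ->]]]; apply: in_oD; [apply: in_o_nat|apply: in_oM; [apply: in_o_nat|apply: in_o_omega]].
Qed.

Lemma PT_E a b c e i t01 t02 j t12 k :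
  mk3 1 0 0 0 a b 0 c e *m mk3 i t01 t02 0 j t12 0 0 k =
  mk3 i t01 t02 0 (a*j) (a*t12 + b*k) 0 (c*j) (c*t12 + e*k).
Proof. by rewrite mk3_mul; congr mk3; ring. Qed.

Lemma decomp_eq y i j k al be ga g1 g2 g3 : SL_o y ->
  phi2 (invmx y) *m diag3 i j k *m upper3 al be ga *m upper3 g1 g2 g3 =
  mk3 i (i*(al+g1)) (i*(g2 + al*g3 + be)) 0 (y j1 j1 * j)
      (y j1 j1 * (j*(ga+g3)) + (- y j0 j1) * k) 0 ((- y j1 j0) * j)
      ((- y j1 j0) * (j*(ga+g3)) + y j0 j0 * k).
Proof.
move=> [_ hd]; rewrite -!mulmxA (mulmxA (diag3 _ _ _)) dug_E invmx2 // phi2E !mxE /=.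
by rewrite PT_E.
Qed.
Arguments mk3_inj {a b c d e f g h k a' b' c' d' e' f' g' h' k'}. Arguments unit3 {i j k}. Arguments unit_o_neq0 {u}. Arguments rep3_unique {r r'}. Arguments rep3_o {r}.

Lemma diff3 x x' m m' : in_o m -> in_o m' -> x + 3 * m = x' + 3 * m' ->
  exists k, in_o k /\ x - x' = 3 * k.
Proof.
move=> hm hm' h; exists (m' - m); split; first exact: in_oB hm' hm.
apply: (@eq_mod _ _ 1 (x + 3 * m - (x' + 3 * m'))); first by rewrite h subrr.
ring.
Qed.

Arguments diff3 {x x' m m'}.

Lemma uniq_main Crep Arep (hC : is_rep_nonzero_mod_units Crep)
  (hA : forall c, Crep c -> is_rep_mod c (Arep c)) y d u g y' d' u' g' :
  Yset Crep Arep y -> D3 d -> U3 u -> Gamma_inf3 g ->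
  Yset Crep Arep y' -> D3 d' -> U3 u' -> Gamma_inf3 g' ->
  phi2 (invmx y) *m d *m u *m g = phi2 (invmx y') *m d' *m u' *m g' ->
  [/\ y = y', d = d' & u = u'].
Proof.
move=> hy [i [j [k [hi hj hk hijk ->]]]] [al [be [ga [ral rbe rga ->]]]]
  /Gamma_inf3_E [g1 [g2 [g3 [[m1 [hm1 ->]] [m2 [hm2 ->]] [m3 [hm3 ->]] ->]]]].
move=> hy' [i' [j' [k' [hi' hj' hk' hijk' ->]]]] [al' [be' [ga' [ral' rbe' rga' ->]]]]
  /Gamma_inf3_E [g1' [g2' [g3' [[m1' [hm1' ->]] [m2' [hm2' ->]] [m3' [hm3' ->]] ->]]]].
have hyS := Yset_SL _ _ _ hy; have hyS' := Yset_SL _ _ _ hy'.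
rewrite !decomp_eq // => E.
have [ei e01 e02 _ [e11 e12 _ e21 e22]] := mk3_inj E.
have [ui uj uk] := unit3 hi hj hk hijk.
have [ui' uj' uk'] := unit3 hi' hj' hk' hijk'.
have ni := unit_o_neq0 ui; have nj := unit_o_neq0 uj; have nk := unit_o_neq0 uk.
have ni' := unit_o_neq0 ui'; have nj' := unit_o_neq0 uj'.
have hcj : y j1 j0 * j = y' j1 j0 * j' by move: e21; rewrite !mulNr => /oppr_inj.
have [ey ej] : y = y' /\ j = j'.
  case: hy => [[hyS0 [hc ha]] | hy1]; case: hy' => [[hyS0' [hc' ha']] | hy1'].
  - have [hco hcn] := hC.1 _ hc.
    have [hco' hcn'] := hC.1 _ hc'.
    have [c0 [_ [_ huniq]]] := hC.2 _ hco hcn.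
    have e1 := huniq _ hc (ex_intro _ 1 (conj (conj in_o1 (ex_intro _ 1 (conj in_o1 (mulr1 1)))) (esym (mul1r _)))).
    have e2 : y' j1 j0 = c0.
      apply: huniq => //; exists (j' * (i * k)); split.
        split; first by apply: in_oM hj' (in_oM hi hk).
        exists (j * (i' * k')); split; first by apply: in_oM hj (in_oM hi' hk').
        by rewrite -[RHS]mulr1 -{1}hijk -hijk'; ring.
      rewrite (_ : _ * _ = (y' j1 j0 * j') * (i * k)); last by ring.
      by rewrite -hcj -[LHS]mulr1 -hijk; ring.
    have ecc : y j1 j0 = y' j1 j0 by rewrite e1 e2.
    have ej : j = j' by move: hcj; rewrite ecc => /(mulfI hcn').
    have ee : y j1 j1 = y' j1 j1 by move: e11; rewrite ej => /(mulIf nj').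
    have hyd : y j0 j0 * y j1 j1 - y j0 j1 * y j1 j0 = 1 by rewrite -det2; case: hyS.
    have hyd' : y' j0 j0 * y' j1 j1 - y' j0 j1 * y' j1 j0 = 1 by rewrite -det2; case: hyS'.
    have [hAr hrep] := hA _ hc.
    have [a0 [_ [_ hu]]] := hrep _ (hyS.1 j0 j0).
    have ea0 := hu _ ha (ex_intro _ 0 (conj in_o0 (etrans (subrr _) (esym (mul0r _))))).
    have ea : y j0 j0 = y' j0 j0.
      rewrite ea0; symmetry; apply: hu; first by rewrite ecc.
      exists (y' j0 j0 * y j0 j1 - y j0 j0 * y' j0 j1); split.
        by apply: in_oB; apply: in_oM; (apply: hyS.1 || apply: hyS'.1).
      apply: (@eq_mod2 _ _ (y' j0 j0) (y j0 j0 * y j1 j1 - y j0 j1 * y j1 j0 - 1)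
                          (- y j0 j0) (y' j0 j0 * y' j1 j1 - y' j0 j1 * y' j1 j0 - 1)).
      + by rewrite hyd subrr.
      + by rewrite hyd' subrr.
      by rewrite ecc ee; ring.
    have eb : y j0 j1 = y' j0 j1.
      apply: (mulIf hcn); apply: (@eq_mod2 _ _ (- 1) (y j0 j0 * y j1 j1 - y j0 j1 * y j1 j0 - 1)
                          1 (y' j0 j0 * y' j1 j1 - y' j0 j1 * y' j1 j0 - 1)).
      + by rewrite hyd subrr.
      + by rewrite hyd' subrr.
      by rewrite ecc ee ea; ring.
    by split => //; rewrite (mk2_eta y) (mk2_eta y') ea eb ecc ee.
  - have [_ hcn] := hC.1 _ hc.
    move: hcj; rewrite hy1' mxE /= mul0r => /eqP; rewrite mulf_eq0 (negbTE hcn) (negbTE nj) //.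
  - have [_ hcn] := hC.1 _ hc'.
    move: hcj; rewrite hy1 mxE /= mul0r => /eqP; rewrite eq_sym mulf_eq0 (negbTE hcn) (negbTE nj') //.
  - split; first by rewrite hy1 hy1'.
    by move: e11; rewrite hy1 hy1' mxE /= !mul1r.
subst y' j'.
have ek : k = k'.
  apply: (mulfI (mulf_neq0 ni nj)); by rewrite hijk ei hijk'.
subst i' k'.
have hal := rep3_o ral.
have eal : al = al'.
  apply: rep3_unique => //; apply: (diff3 hm1 hm1').
  by move: e01 => /(mulfI ni) ->.
subst al'.
have eT : j * (ga + 3 * m3) = j * (ga' + 3 * m3').
  have hyd : y j0 j0 * y j1 j1 - y j0 j1 * y j1 j0 = 1 by rewrite -det2; case: hyS.
  set T := j * (ga + 3 * m3); set T' := j * (ga' + 3 * m3').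
  apply: (@eq_mod3 _ _ (y j0 j0) (y j1 j1 * T + - y j0 j1 * k - (y j1 j1 * T' + - y j0 j1 * k))
     (y j0 j1) (- y j1 j0 * T + y j0 j0 * k - (- y j1 j0 * T' + y j0 j0 * k))
     (- (T - T')) (y j0 j0 * y j1 j1 - y j0 j1 * y j1 j0 - 1)).
  + by rewrite e12 subrr.
  + by rewrite e22 subrr.
  + by rewrite hyd subrr.
  ring.
have ega : ga = ga'.
  apply: rep3_unique => //; apply: (diff3 hm3 hm3').
  by move: eT => /(mulfI nj).
subst ga'.
have ebe : be = be'.
  apply: rep3_unique => //.
  exists ((m2' - m2) + al * (m3' - m3)); split.
    by apply: in_oD; [apply: in_oB|apply: in_oM => //; apply: in_oB].
  apply: (@eq_mod _ _ 1 (3 * m2 + al * (3 * m3) + be - (3 * m2' + al * (3 * m3') + be'))).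
    by move: e02 => /(mulfI ni) ->; rewrite subrr.
  ring.
by subst be'.
Qed.

Theorem theorem2p14 (Crep : algC -> Prop) (Arep : algC -> algC -> Prop)
  (hC : is_rep_nonzero_mod_units Crep)
  (hA : forall c, Crep c -> is_rep_mod c (Arep c)) :
  (forall A : 'M[algC]_3,
     Delta2 A <->
     exists y d u g, [/\ Yset Crep Arep y, D3 d, U3 u, Gamma_inf3 g &
                        A = phi2 (invmx y) *m d *m u *m g]) /\
  (forall y d u g y' d' u' g',
     Yset Crep Arep y -> D3 d -> U3 u -> Gamma_inf3 g ->
     Yset Crep Arep y' -> D3 d' -> U3 u' -> Gamma_inf3 g' ->
     phi2 (invmx y) *m d *m u *m g = phi2 (invmx y') *m d' *m u' *m g' ->
     [/\ y = y', d = d' & u = u']).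
Proof.
split; first last.
  move=> y d u g y' d' u' g'; exact: (@uniq_main Crep Arep hC hA).
move=> A; split; first exact: (@exist_main Crep Arep hC hA).
move=> [y [d [u [g [hy hd hu hg ->]]]]].
have [hyo hyd] := Yset_SL _ _ _ hy.
move: hd hu => [i [j [k [hi hj hk hijk ->]]]] [al [be [ga [ral rbe rga ->]]]].
move: hg => /Gamma_inf3_E [g1 [g2 [g3 [h1 h2 h3 ->]]]].
rewrite -!mulmxA (mulmxA (diag3 _ _ _)) dug_E invmx2 // phi2E !mxE /= PT_E.
split; last by rewrite !mxE.
have o1 := in3_o _ h1; have o2 := in3_o _ h2; have o3 := in3_o _ h3.
have oal := rep3_o ral; have obe := rep3_o rbe; have oga := rep3_o rga.
split.
  apply: mk3_all; repeat first [apply: in_o0 | apply: in_oD | apply: in_oM | apply: in_oN | apply: hyo | assumption].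
rewrite det_mk3 -[RHS]hyd det2 -[RHS]mulr1 -hijk; ring.
Qed.
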